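(* Let $n\ge1$ and $\vec p,\vec q\in[0,1]^n$ with $p_i\ge q_i$ for all $i$. Let $X=S_{\vec p}$ be a sum of $n$ independent $\mathrm{Ber}(p_i)$ random variables and $Y=S_{\vec q}$ a sum of $n$ independent $\mathrm{Ber}(q_i)$ random variables. Let $\sigma_{\vec p}^2=\mathrm{Var}(X)=\sum_ip_i(1-p_i)$, $m_{\vec p}=\mathbb E X$, $\Delta=\sum_{i=1}^n(p_i-q_i)$, $g(k)=\mathbb P(X\ge k)-\mathbb P(Y\ge k)$ for $k\in\mathbb Z$, and $J=\sum_{k\in\mathbb Z}(k-m_{\vec p})^2g(k)$. Then $$J\le2\Delta\big(\sigma_{\vec p}^2+1+\Delta^2\big).$$ *)

(* Defs.v *)
(* discrete probability over the finite outcome space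
   {ffun 'I_n -> bool} of n independent Bernoulli trials. *)
From mathcomp Require Import all_boot all_order all_algebra.
Set Implicit Arguments. Unset Strict Implicit. Unset Printing Implicit Defensive.
Import Order.TTheory GRing.Theory Num.Theory.
Local Open Scope ring_scope.

Definition ber_weight (R : realFieldType) (n : nat) (p : 'I_n -> R)
  (w : {ffun 'I_n -> bool}) : R :=
  \prod_(i < n) (if w i then p i else 1 - p i).

Definition succ_count (n : nat) (w : {ffun 'I_n -> bool}) : nat :=
  (\sum_(i < n) (w i : nat))%N.

Definition tail_prob (R : realFieldType) (n : nat) (p : 'I_n -> R) (k : int) : R :=
  \sum_(w : {ffun 'I_n -> bool} | (k <= (succ_count w)%:Z)%R) ber_weight p w.

Definition mean_pb (R : realFieldType) (n : nat) (p : 'I_n -> R) : R :=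
  \sum_(i < n) p i.

Definition var_pb (R : realFieldType) (n : nat) (p : 'I_n -> R) : R :=
  \sum_(i < n) p i * (1 - p i).

Definition Delta_pq (R : realFieldType) (n : nat) (p q : 'I_n -> R) : R :=
  \sum_(i < n) (p i - q i).

Definition g_pq (R : realFieldType) (n : nat) (p q : 'I_n -> R) (k : int) : R :=
  tail_prob p k - tail_prob q k.

(* J = sum_{k in Z} (k - m_p)^2 g(k).  Since g(k) = 0 for k <= 0 and k > n
   (both tails equal 1, resp. 0), the sum over Z equals the finite sum over
   k = 0..n. *)
Definition J_pq (R : realFieldType) (n : nat) (p q : 'I_n -> R) : R :=
  \sum_(0 <= k < n.+1) ((k%:R - mean_pb p) ^+ 2 * g_pq p q k%:Z).

(* Main.v *)
Require Import Defs.
From mathcomp Require Import all_boot all_order all_algebra.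
From mathcomp Require Import ring lra.
Set Implicit Arguments. Unset Strict Implicit. Unset Printing Implicit Defensive.
Import Order.TTheory GRing.Theory Num.Theory.
Local Open Scope ring_scope.

Section Aux.
Variable R : realFieldType.
Variable n : nat.
Implicit Types (r : 'I_n -> R) (w : {ffun 'I_n -> bool}).

Definition EE r (F : {ffun 'I_n -> bool} -> R) := \sum_w ber_weight r w * F w.
Definition upd r (j : 'I_n) (t : R) := fun i => if i == j then t else r i.
Definition ind (b : bool) : R := if b then 1 else 0.
Definition Sr w : R := \sum_(i < n) ind (w i).

Lemma ber_weight_ext r r' w : (forall i, r i = r' i) -> ber_weight r w = ber_weight r' w.
Proof. by move=> h; rewrite /ber_weight; apply: eq_bigr => i _; rewrite h. Qed.

Lemma EE_ext r r' F : (forall i, r i = r' i) -> EE r F = EE r' F.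
Proof. by move=> h; apply: eq_bigr => w _; rewrite (ber_weight_ext w h). Qed.

Lemma EE_eqF r F G : (forall w, F w = G w) -> EE r F = EE r G.
Proof. by move=> h; apply: eq_bigr => w _; rewrite h. Qed.

Lemma weight_upd_split r j t w : ber_weight (upd r j t) w =
  (if w j then t else 1 - t) * \prod_(i < n | i != j) (if w i then r i else 1 - r i).
Proof.
rewrite /ber_weight (bigD1 j) //= /upd eqxx; congr (_ * _).
by apply: eq_bigr => i /negbTE ->.
Qed.

Lemma weight_upd r j t w : ber_weight (upd r j t) w =
  t * ber_weight (upd r j 1) w + (1 - t) * ber_weight (upd r j 0) w.
Proof. rewrite !weight_upd_split; case: (w j); ring. Qed.

Lemma EE_upd r j t F : EE (upd r j t) F = t * EE (upd r j 1) F + (1 - t) * EE (upd r j 0) F.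
Proof.
rewrite /EE !mulr_sumr -big_split /=; apply: eq_bigr => w _.
rewrite weight_upd; ring.
Qed.

Lemma EE_self r j F : EE r F = EE (upd r j (r j)) F.
Proof. by apply: EE_ext => i; rewrite /upd; case: eqP => [->|]. Qed.

Lemma EE_upd1 r j F G : (forall w, w j -> F w = G w) -> EE (upd r j 1) F = EE (upd r j 1) G.
Proof.
move=> h; apply: eq_bigr => w _; rewrite weight_upd_split.
case: (boolP (w j)) => [wj|_]; first by rewrite (h w wj).
by rewrite subrr !mul0r.
Qed.

Lemma EE_upd0 r j F G : (forall w, ~~ w j -> F w = G w) -> EE (upd r j 0) F = EE (upd r j 0) G.
Proof.
move=> h; apply: eq_bigr => w _; rewrite weight_upd_split.
case: (boolP (w j)) => [_ | wj]; last by rewrite (h w wj).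
by rewrite !mul0r.
Qed.

Lemma EE_one r : EE r (fun _ => 1) = 1.
Proof.
rewrite /EE; under eq_bigr do rewrite mulr1.
rewrite /ber_weight.
rewrite -(bigA_distr_bigA (fun i (b : bool) => if b then r i else 1 - r i)) /=.
by apply: big1 => i _; rewrite big_bool /= subrKC.
Qed.

Lemma EE_zero r : EE r (fun _ => 0) = 0.
Proof. by apply: big1 => w _; rewrite mulr0. Qed.

Lemma EE_add r F G : EE r (fun w => F w + G w) = EE r F + EE r G.
Proof. by rewrite /EE -big_split; apply: eq_bigr => w _; rewrite mulrDr. Qed.

Lemma EE_sub r F G : EE r (fun w => F w - G w) = EE r F - EE r G.
Proof. by rewrite /EE -sumrB; apply: eq_bigr => w _; rewrite mulrBr. Qed.

Lemma EE_scale r a F : EE r (fun w => a * F w) = a * EE r F.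
Proof. by rewrite /EE mulr_sumr; apply: eq_bigr => w _; rewrite mulrCA. Qed.

Lemma EE_const r c : EE r (fun _ => c) = c.
Proof. by rewrite -[c]mulr1 (EE_scale r c (fun _ => 1)) EE_one. Qed.

Lemma EE_sum r (F : 'I_n -> {ffun 'I_n -> bool} -> R) :
  EE r (fun w => \sum_i F i w) = \sum_i EE r (F i).
Proof.
rewrite /EE; under eq_bigr do rewrite mulr_sumr.
exact: exchange_big.
Qed.

Lemma EE_coord r k : EE r (fun w => ind (w k)) = r k.
Proof.
rewrite (EE_self r k) EE_upd.
rewrite (@EE_upd1 r k _ (fun _ => 1)); last by move=> w ->.
rewrite (@EE_upd0 r k _ (fun _ => 0)); last by move=> w /negbTE ->.
by rewrite EE_one EE_zero mulr0 mulr1 addr0.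
Qed.

Lemma EE_cross r i k : i != k -> EE r (fun w => ind (w i) * ind (w k)) = r i * r k.
Proof.
move=> ik.
rewrite (EE_self r i) EE_upd.
rewrite (@EE_upd1 r i _ (fun w => ind (w k))); last by move=> w ->; rewrite /ind mul1r.
rewrite (@EE_upd0 r i _ (fun _ => 0)); last by move=> w /negbTE ->; rewrite /ind mul0r.
by rewrite EE_coord EE_zero mulr0 addr0 /upd eq_sym (negbTE ik).
Qed.

Lemma EE_var r c : EE r (fun w => (Sr w - c) ^+ 2) = var_pb r + (mean_pb r - c) ^+ 2.
Proof.
have e : forall w, (Sr w - c) ^+ 2 =
   \sum_i \sum_k (ind (w i) * ind (w k)) + ((-2 * c) * Sr w + c ^+ 2).
  move=> w; rewrite -[X in X = _]/((Sr w - c) ^+ 2).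
  have -> : \sum_i \sum_k (ind (w i) * ind (w k)) = Sr w * Sr w.
    rewrite /Sr mulr_suml; apply: eq_bigr => i _; by rewrite mulr_sumr.
  ring.
rewrite (EE_eqF _ e) EE_add EE_add EE_scale EE_const EE_sum.
have hS : EE r Sr = mean_pb r.
  by rewrite /Sr (EE_sum r (fun i w => ind (w i))); apply: eq_bigr => i _; rewrite EE_coord.
rewrite hS.
have -> : \sum_i EE r (fun w => \sum_k ind (w i) * ind (w k)) =
          \sum_i (r i * (1 - r i) + r i * mean_pb r).
  apply: eq_bigr => i _.
  rewrite (EE_sum r (fun k w => ind (w i) * ind (w k))) (bigD1 i) //=.
  rewrite (@EE_eqF r _ (fun w => ind (w i))); last by move=> w; rewrite /ind; case: (w i); rewrite ?mulr1 ?mulr0.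
  rewrite EE_coord.
  rewrite (eq_bigr (fun k => r i * r k)); last by move=> k ki; rewrite EE_cross // eq_sym.
  rewrite /mean_pb [X in _ = _ + _ * X](bigD1 i) //= mulrDr -mulr_sumr; ring.
rewrite big_split /= -mulr_suml /var_pb -/(mean_pb r); ring.
Qed.

Definition flip (j : 'I_n) w : {ffun 'I_n -> bool} := [ffun i => if i == j then ~~ w i else w i].

Lemma flipK j : involutive (flip j).
Proof. by move=> w; apply/ffunP => i; rewrite !ffunE; case: eqP => // _; exact: negbK. Qed.

Lemma flip_shift r j (H : nat -> R) :
  EE (upd r j 1) (fun w => H (succ_count w)) = EE (upd r j 0) (fun w => H (succ_count w).+1).
Proof.
rewrite /EE (reindex_inj (inv_inj (flipK j))) /=.
apply: eq_bigr => w _.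
rewrite !weight_upd_split [flip j w j]ffunE eqxx.
have -> : \prod_(i < n | i != j) (if flip j w i then r i else 1 - r i) =
          \prod_(i < n | i != j) (if w i then r i else 1 - r i).
  by apply: eq_bigr => i /negbTE ne; rewrite ffunE ne.
case: (boolP (w j)) => [wj|nwj]; first by rewrite /= subrr !mul0r.
have -> : succ_count (flip j w) = (succ_count w).+1.
  rewrite /succ_count (bigD1 j) //= [in RHS](bigD1 j) //= ffunE eqxx (negbTE nwj) /=.
  congr (_ .+1); apply: eq_bigr => i /negbTE ne; by rewrite ffunE ne.
by rewrite /= subr0.
Qed.

Lemma succ_count_le w : (succ_count w <= n)%N.
Proof.
rewrite /succ_count; apply: leq_trans (_ : (\sum_(i < n) 1 <= n)%N).
  by apply: leq_sum => i _; case: (w i).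
by rewrite sum1_card card_ord.
Qed.

Lemma Sr_nat w : (succ_count w)%:R = Sr w.
Proof.
by rewrite /succ_count natr_sum; apply: eq_bigr => i _; rewrite /ind; case: (w i).
Qed.

Lemma tail_EE r (c : nat -> R) :
  \sum_(0 <= k < n.+1) c k * tail_prob r k%:Z =
  EE r (fun w => \sum_(0 <= k < (succ_count w).+1) c k).
Proof.
rewrite /tail_prob /EE.
transitivity (\sum_(0 <= k < n.+1) \sum_w
   (if (k <= succ_count w)%N then c k * ber_weight r w else 0)).
  apply: eq_bigr => k _; rewrite mulr_sumr big_mkcond; apply: eq_bigr => w _.
  by rewrite lez_nat.
rewrite exchange_big; apply: eq_bigr => w _.
rewrite mulr_sumr (big_nat_widen 0 (succ_count w).+1 n.+1 xpredT); last first.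
  by rewrite ltnS succ_count_le.
rewrite [in RHS]big_mkcond; apply: eq_bigr => k _ /=.
by rewrite ltnS; case: ifP => // _; rewrite mulrC.
Qed.

End Aux.

Lemma tele (R : zmodType) (u : nat -> R) k :
  \sum_(0 <= j < k) (u j - u j.+1) = u 0%N - u k.
Proof.
elim: k => [|k IH]; first by rewrite big_geq // subrr.
by rewrite big_nat_recr //= IH addrA subrK.
Qed.
Theorem lemma8 (R : realFieldType) (n : nat) (p q : 'I_n -> R)
  (hn : (1 <= n)%N)
  (hp : forall i, 0 <= p i <= 1) (hq : forall i, 0 <= q i <= 1)
  (hpq : forall i, q i <= p i) :
  J_pq p q <= 2 * Delta_pq p q * (var_pb p + 1 + Delta_pq p q ^+ 2).
Proof.
set m := mean_pb p.
set D := Delta_pq p q.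
set F := fun w : {ffun 'I_n -> bool} =>
  \sum_(0 <= k < (succ_count w).+1) ((k%:R - m) ^+ 2 : R).
have hJ : J_pq p q = EE p F - EE q F.
  rewrite /J_pq /g_pq; under eq_bigr do rewrite mulrBr.
  by rewrite sumrB !tail_EE.
pose hy (j : nat) := fun i : 'I_n => if (i < j)%N then q i else p i.
pose s (j : 'I_n) := upd (hy j) j 0.
have hT : EE p F - EE q F =
   \sum_(j < n) (p j - q j) * (var_pb (s j) + (mean_pb (s j) - (m - 1)) ^+ 2).
  rewrite (@EE_ext _ _ p (hy 0%N)) // (@EE_ext _ _ q (hy n)); last first.
    by move=> i; rewrite /hy ltn_ord.
  rewrite -(tele (fun j => EE (hy j) F)) big_mkord; apply: eq_bigr => j _.
  rewrite (@EE_ext _ _ (hy j) (upd (hy j) j (p j))); last first.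
    by move=> i; rewrite /upd /hy; case: eqP => [->|]; rewrite ?ltnn.
  rewrite (@EE_ext _ _ (hy j.+1) (upd (hy j) j (q j))); last first.
    move=> i; rewrite /upd /hy ltnS leq_eqVlt; case: (eqVneq i j) => [->|ne]; rewrite ?eqxx //.
    by move: ne; rewrite -val_eqE => /negbTE ->.

  have key : EE (upd (hy j) j 1) F - EE (upd (hy j) j 0) F =
       var_pb (s j) + (mean_pb (s j) - (m - 1)) ^+ 2.
    rewrite /F (flip_shift _ _ (fun x => \sum_(0 <= k < x.+1) ((k%:R - m) ^+ 2 : R))) -EE_sub -EE_var; apply: EE_eqF => w /=.
    rewrite big_nat_recr //= addrAC subrr add0r -Sr_nat -addn1 natrD; ring.
  rewrite EE_upd (EE_upd _ _ (q j)) -key; ring.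
rewrite hJ hT.
have hD0 : 0 <= D by apply: sumr_ge0 => i _; rewrite subr_ge0.
have hV0 : 0 <= var_pb p.
  apply: sumr_ge0 => i _; have /andP[h1 h2] := hp i; apply: mulr_ge0 => //; lra.
have bnd : forall j, var_pb (s j) + (mean_pb (s j) - (m - 1)) ^+ 2 <= var_pb p + D + 1 + D ^+ 2.
  move=> j.
  have hv : var_pb (s j) <= var_pb p + D.
    rewrite /var_pb /D /Delta_pq -big_split; apply: ler_sum => i _ /=.
    have := hp i; have := hq i; have := hpq i; rewrite /s /upd /hy.
    move=> h1 /andP[h2 h3] /andP[h4 h5].
    case: (i == j); first by nra.
    by case: ifP => _; nra.
  set X := \sum_i (p i - s j i).
  have hX : mean_pb (s j) - (m - 1) = 1 - X by rewrite /X sumrB /m /mean_pb; ring.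
  have hX0 : 0 <= X.
    apply: sumr_ge0 => i _; have := hp i; have := hq i; have := hpq i.
    rewrite /s /upd /hy => h1 /andP[h2 h3] /andP[h4 h5].
    by case: (i == j); last case: ifP => _; lra.
  have hX1 : X <= 1 + D.
    rewrite /X /D /Delta_pq (bigD1 j) //= [X in _ <= _ + X](bigD1 j) //=.
    have : \sum_(i < n | i != j) (p i - s j i) <= \sum_(i < n | i != j) (p i - q i).
      apply: ler_sum => i /negbTE ne; have := hpq i.
      by rewrite /s /upd /hy ne; case: ifP => _; lra.
    have := hp j; have := hq j; have := hpq j.
    rewrite /s /upd eqxx => h1 /andP[h2 h3] /andP[h4 h5]; lra.
  rewrite hX; case: (lerP X 1) => h; nra.
apply: le_trans (_ : \sum_j (p j - q j) * (var_pb p + D + 1 + D ^+ 2) <= _).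
  apply: ler_sum => j _; apply: ler_wpM2l; first by rewrite subr_ge0.
  exact: bnd.
rewrite -mulr_suml -/(Delta_pq p q) -/D.
have : 0 <= D * var_pb p by apply: mulr_ge0.
nra.
Qed.
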